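(* Let $L$ be a Lipschitz language. Every affinely satisfiable $L$-theory has a model (an $L$-structure satisfying all its conditions).
   Context: A Lipschitz language $L$ consists of constant, function and relation symbols, each function symbol $F$ / relation symbol $R$ with an arity $n\ge1$ and a Lipschitz constant $\lambda_F,\lambda_R\ge 0$, and contains a binary symbol $d$ with $\lambda_d=1$. An $L$-structure is a complete metric space $(M,d)$ of diameter $\le1$ with interpretations $c^M\in M$, $\lambda_F$-Lipschitz $F^M:M^n\to M$, $\lambda_R$-Lipschitz $R^M:M^n\to[0,1]$ (metric on $M^n$: $\sum_i d(a_i,b_i)$). Affine formulas are built from atomic formulas $1$, $d(t_1,t_2)$, $R(t_1,\dots,t_n)$ by $\phi+\psi$, $r\phi$ ($r\in\mathbb R$), $\sup_x$, $\inf_x$, with values defined in the evident way. A closed condition is an expression $\sigma\le\eta$ with $\sigma,\eta$ affine sentences; $M$ satisfies it if $\sigma^M\le\eta^M$; a theory is a set of closed conditions. A theory $T$ is affinely satisfiable if for all conditions $\phi_1\le\psi_1,\dots,\phi_n\le\psi_n$ in $T$ and all reals $r_1,\dots,r_n\ge 0$, the condition $\sum_i r_i\phi_i\le\sum_i r_i\psi_i$ is satisfied by some $L$-structure. *)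

(* Defs.v *)
From HB Require Import structures.
From mathcomp Require Import all_boot all_order all_algebra.
From mathcomp Require Import boolp classical_sets reals.
From mathcomp Require Import Rstruct.
From Stdlib Require Rdefinitions.
Local Notation R := Rdefinitions.R.
From Stdlib Require List.

Set Implicit Arguments.
Unset Strict Implicit.
Unset Printing Implicit Defensive.

Import Order.TTheory GRing.Theory Num.Theory.
Local Open Scope classical_set_scope.
Local Open Scope ring_scope.

(* Lipschitz languages.  The distinguished binary symbol d (with       *)
(* Lipschitz constant 1) is built into the syntax below as the atomic  *)
(* formula [FDist]; it is always interpreted as the metric.            *)
Record language := Language {
  const_sym : Type;
  func_sym : Type;
  rel_sym : Type;
  func_arity : func_sym -> nat;
  rel_arity : rel_sym -> nat;
  func_arity_pos : forall F, (0 < func_arity F)%N;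
  rel_arity_pos : forall P, (0 < rel_arity P)%N;
  func_lip : func_sym -> R;
  rel_lip : rel_sym -> R;
  func_lip_ge0 : forall F, 0 <= func_lip F;
  rel_lip_ge0 : forall P, 0 <= rel_lip P
}.

Record structure (L : language) := Structure {
  carrier :> Type;
  carrier_inhabited : inhabited carrier;
  dist : carrier -> carrier -> R;
  dist_ge0 : forall x y, 0 <= dist x y;
  dist_eq0 : forall x y, dist x y = 0 <-> x = y;
  dist_sym : forall x y, dist x y = dist y x;
  dist_triangle : forall x y z, dist x z <= dist x y + dist y z;
  dist_le1 : forall x y, dist x y <= 1;
  dist_complete : forall u : nat -> carrier,
    (forall eps : R, 0 < eps -> exists N : nat,
        forall m n : nat, (N <= m)%N -> (N <= n)%N -> dist (u m) (u n) < eps) ->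
    exists l : carrier, forall eps : R, 0 < eps -> exists N : nat,
        forall n : nat, (N <= n)%N -> dist (u n) l < eps;
  cinterp : const_sym L -> carrier;
  finterp : forall F : func_sym L, ('I_(func_arity F) -> carrier) -> carrier;
  finterp_lip : forall (F : func_sym L) (a b : 'I_(func_arity F) -> carrier),
    dist (finterp a) (finterp b)
      <= func_lip F * \sum_(i < func_arity F) dist (a i) (b i);
  rinterp : forall P : rel_sym L, ('I_(rel_arity P) -> carrier) -> R;
  rinterp_range : forall (P : rel_sym L) (a : 'I_(rel_arity P) -> carrier),
    0 <= rinterp a <= 1;
  rinterp_lip : forall (P : rel_sym L) (a b : 'I_(rel_arity P) -> carrier),
    `|rinterp a - rinterp b|
      <= rel_lip P * \sum_(i < rel_arity P) dist (a i) (b i)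
}.

Inductive term (L : language) : Type :=
| TVar : nat -> term L
| TConst : const_sym L -> term L
| TFun : forall F : func_sym L, ('I_(func_arity F) -> term L) -> term L.

Inductive formula (L : language) : Type :=
| FOne : formula L
| FDist : term L -> term L -> formula L
| FRel : forall P : rel_sym L, ('I_(rel_arity P) -> term L) -> formula L
| FAdd : formula L -> formula L -> formula L
| FScale : R -> formula L -> formula L
| FSup : nat -> formula L -> formula L
| FInf : nat -> formula L -> formula L.

Arguments FOne {L}.

Fixpoint term_fv L (t : term L) (x : nat) : Prop :=
  match t with
  | TVar y => y = x
  | TConst _ => False
  | TFun _ args => exists i, term_fv (args i) x
  end.

Fixpoint formula_fv L (phi : formula L) (x : nat) : Prop :=
  match phi with
  | FOne => False
  | FDist t1 t2 => term_fv t1 x \/ term_fv t2 x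
  | FRel _ args => exists i, term_fv (args i) x
  | FAdd p q => formula_fv p x \/ formula_fv q x
  | FScale _ p => formula_fv p x
  | FSup y p => formula_fv p x /\ x <> y
  | FInf y p => formula_fv p x /\ x <> y
  end.

Definition sentence L (phi : formula L) : Prop := forall x, ~ formula_fv phi x.

Definition update (M : Type) (e : nat -> M) (x : nat) (m : M) : nat -> M :=
  fun y => if (y == x)%N then m else e y.

Fixpoint term_eval L (M : structure L) (e : nat -> M) (t : term L) : M :=
  match t with
  | TVar y => e y
  | TConst c => cinterp M c
  | TFun F args => finterp (fun i => term_eval e (args i))
  end.

Fixpoint formula_eval L (M : structure L) (e : nat -> M) (phi : formula L) : R :=
  match phi with
  | FOne => 1
  | FDist t1 t2 => dist (term_eval e t1) (term_eval e t2)
  | FRel P args => rinterp (fun i => term_eval e (args i))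
  | FAdd p q => formula_eval e p + formula_eval e q
  | FScale r p => r * formula_eval e p
  | FSup y p => sup [set formula_eval (update e y m) p | m in [set: M]]
  | FInf y p => inf [set formula_eval (update e y m) p | m in [set: M]]
  end.

(* A condition (sigma, eta) stands for "sigma <= eta". *)
Definition condition (L : language) : Type := (formula L * formula L)%type.

Definition closed_condition L (c : condition L) : Prop :=
  sentence c.1 /\ sentence c.2.

(* For sentences the value does not depend on the assignment. *)
Definition satisfies L (M : structure L) (c : condition L) : Prop :=
  forall e : nat -> M, formula_eval e c.1 <= formula_eval e c.2.

Definition theory (L : language) : Type := condition L -> Prop.

Definition is_theory L (T : theory L) : Prop :=
  forall c, T c -> closed_condition c.

Definition comb_formula L (l : seq (R * formula L)) : formula L :=
  foldr (fun p acc => FAdd (FScale p.1 p.2) acc) (FScale 0 FOne) l.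

Definition comb_condition L (l : seq (R * condition L)) : condition L :=
  (comb_formula [seq (p.1, p.2.1) | p <- l],
   comb_formula [seq (p.1, p.2.2) | p <- l]).

Definition affinely_satisfiable L (T : theory L) : Prop :=
  forall l : seq (R * condition L),
    (forall p, List.In p l -> T p.2 /\ 0 <= p.1) ->
    exists M : structure L, satisfies M (comb_condition l).

Definition is_model L (M : structure L) (T : theory L) : Prop :=
  forall c, T c -> satisfies M c.

(* Main.v *)
Require Import Defs.
From mathcomp Require Import all_boot all_order all_algebra.
From mathcomp Require Import boolp classical_sets reals Rstruct filter.
From mathcomp Require Import lra.
From Stdlib Require Import ClassicalEpsilon ProofIrrelevance.
From Stdlib Require Rdefinitions.
Local Notation R := Rdefinitions.R.
Set Implicit Arguments.
Unset Strict Implicit.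
Unset Printing Implicit Defensive.
Import Order.TTheory GRing.Theory Num.Theory.
Local Open Scope classical_set_scope.
Local Open Scope ring_scope.

Lemma small_exists (eps : R) : 0 < eps -> exists n : nat, 1 / (n.+1)%:R < eps.
Proof.
move=> he.
have h0 : 0 <= eps^-1 by rewrite invr_ge0 ltW.
have := archi_boundP h0; set n := Num.bound _ => hn.
exists n.
have hp : 0 < (n.+1)%:R :> R by rewrite ltr0Sn.
have h1 : 1 / eps < (n.+1)%:R.
  by rewrite div1r; apply: (lt_le_trans hn); rewrite ler_nat.
rewrite ltr_pdivrMr //; rewrite ltr_pdivrMr // in h1.
by rewrite mulrC.
Qed.

Section SupLemmas.
Variables (T : Type) (f : T -> R) (C : R).
Hypothesis (t0 : T) (hb : forall t, `|f t| <= C).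

Let img := [set f t | t in [set: T]].

Lemma img_has_sup : has_sup img.
Proof.
split; first by exists (f t0), t0.
exists C => _ [t _ <-]; exact: le_trans (ler_norm _) (hb t).
Qed.

Lemma sup_img_ub (D : R) : (forall t, f t <= D) -> sup img <= D.
Proof. move=> h; apply: ge_sup; first by exists (f t0), t0.
by move=> _ [t _ <-]. Qed.

Lemma sup_img_ge t : f t <= sup img.
Proof. by apply: sup_upper_bound; [exact: img_has_sup| exists t]. Qed.

Lemma sup_img_adh (eps : R) : 0 < eps -> exists t, sup img - eps < f t.
Proof.
move=> he; have [_ [t _ <-] h] := sup_adherent he img_has_sup.
by exists t.
Qed.

Lemma sup_img_bound : `|sup img| <= C.
Proof.
rewrite ler_norml; apply/andP; split.
  apply: le_trans (sup_img_ge t0).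
  by have := hb t0; rewrite ler_norml => /andP[].
by apply: sup_img_ub => t; have := hb t; rewrite ler_norml => /andP[].
Qed.

End SupLemmas.

Lemma inf_img (T : Type) (f : T -> R) :
  inf [set f t | t in [set: T]] = - sup [set - f t | t in [set: T]].
Proof. by rewrite /inf image_comp. Qed.

Lemma inf_img_bound (T : Type) (f : T -> R) (C : R) (t0 : T) :
  (forall t, `|f t| <= C) -> `|inf [set f t | t in [set: T]]| <= C.
Proof.
move=> hb; rewrite inf_img normrN.
apply: (sup_img_bound t0) => t; by rewrite normrN.
Qed.

Fixpoint fbound L (p : formula L) : R :=
  match p with
  | FOne => 1 | FDist _ _ => 1 | FRel _ _ => 1
  | FAdd p q => fbound p + fbound q
  | FScale r p => `|r| * fbound p
  | FSup _ p => fbound p | FInf _ p => fbound p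
  end.

Lemma eval_bound L (M : structure L) p : forall e : nat -> M,
  `|formula_eval e p| <= fbound p.
Proof.
case: (carrier_inhabited M) => m0.
elim: p => [|t1 t2|P args|p IHp q IHq|r p IHp|y p IHp|y p IHp] e /=.
- by rewrite normr1.
- by rewrite ger0_norm ?dist_ge0 ?dist_le1.
- by have /andP[h1 h2] := rinterp_range (fun i => term_eval e (args i)); rewrite ger0_norm.
- by apply: le_trans (ler_normD _ _) _; apply: lerD.
- by rewrite normrM; apply: ler_wpM2l.
- by apply: (sup_img_bound m0) => m; exact: IHp.
- by apply: (inf_img_bound m0) => m; exact: IHp.
Qed.

Lemma term_eval_ext L (M : structure L) (t : term L) (e1 e2 : nat -> M) :
  (forall x, term_fv t x -> e1 x = e2 x) -> term_eval e1 t = term_eval e2 t.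
Proof.
elim: t => [y|c|F args IH] /= h; first exact: h.
  by [].
congr finterp; apply: funext => i; apply: IH => x hx; apply: h; by exists i.
Qed.

Lemma formula_eval_ext L (M : structure L) p : forall (e1 e2 : nat -> M),
  (forall x, formula_fv p x -> e1 x = e2 x) -> formula_eval e1 p = formula_eval e2 p.
Proof.
elim: p => [|t1 t2|P args|p IHp q IHq|r p IHp|y p IHp|y p IHp] e1 e2 /= h.
- by [].
- by rewrite (term_eval_ext (e2:=e2) (t:=t1)) ?(term_eval_ext (e2:=e2) (t:=t2)) // => x hx; apply: h; [right|left].
- congr rinterp; apply: funext => i; apply: term_eval_ext => x hx; apply: h; by exists i.
- by rewrite (IHp e1 e2) ?(IHq e1 e2) // => x hx; apply: h; [right|left].
- by rewrite (IHp e1 e2).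
- congr sup; apply: eq_imagel => m _; apply: IHp => x hx; rewrite /update.
  by case: eqP => // nxy; apply: h.
- congr inf; apply: eq_imagel => m _; apply: IHp => x hx; rewrite /update.
  by case: eqP => // nxy; apply: h.
Qed.

Lemma sentence_eval L (M : structure L) p (e1 e2 : nat -> M) :
  sentence p -> formula_eval e1 p = formula_eval e2 p.
Proof. by move=> hs; apply: formula_eval_ext => x /hs. Qed.

Lemma comb_eval L (M : structure L) (e : nat -> M) (l : seq (R * formula L)) :
  formula_eval e (comb_formula l) = \sum_(p <- l) p.1 * formula_eval e p.2.
Proof.
elim: l => [|p l IH] /=; first by rewrite big_nil mul0r.
by rewrite big_cons IH.
Qed.
Definition bnd (I : Type) (f : I -> R) := exists C, forall i, `|f i| <= C.

Record mean (I : Type) := Mean {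
  mf :> (I -> R) -> R;
  mD : forall f g, bnd f -> bnd g -> mf (fun i => f i + g i) = mf f + mf g;
  mZ : forall c f, bnd f -> mf (fun i => c * f i) = c * mf f;
  mle : forall f g, bnd f -> bnd g -> (forall i, f i <= g i) -> mf f <= mf g;
  mC : forall c, mf (fun _ => c) = c
}.

Section BndLemmas.
Variable I : Type.
Lemma bnd_const (c : R) : bnd (fun _ : I => c).
Proof. by exists `|c|. Qed.
Lemma bnd_add (f g : I -> R) : bnd f -> bnd g -> bnd (fun i => f i + g i).
Proof. move=> [C hC] [D hD]; exists (C + D) => i.
by apply: le_trans (ler_normD _ _) _; apply: lerD. Qed.
Lemma bnd_scale (c : R) (f : I -> R) : bnd f -> bnd (fun i => c * f i).
Proof. move=> [C hC]; exists (`|c| * C) => i; rewrite normrM.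
by apply: ler_wpM2l. Qed.
Lemma bnd_opp (f : I -> R) : bnd f -> bnd (fun i => - f i).
Proof. move=> [C hC]; exists C => i; by rewrite normrN. Qed.
Lemma bnd_sub (f g : I -> R) : bnd f -> bnd g -> bnd (fun i => f i - g i).
Proof. by move=> hf hg; apply: bnd_add => //; apply: bnd_opp. Qed.
Lemma bnd_norm (f : I -> R) : bnd f -> bnd (fun i => `|f i|).
Proof. move=> [C hC]; exists C => i; by rewrite normr_id. Qed.
Lemma bnd_sum n (f : 'I_n -> I -> R) : (forall j, bnd (f j)) ->
  bnd (fun i => \sum_(j < n) f j i).
Proof.
move=> h; elim: n f h => [|n IH] f h.
  by exists 0 => i; rewrite big_ord0 normr0.
have := IH (fun j => f (widen_ord (leqnSn n) j)) (fun j => h _).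
move=> hb; have := bnd_add hb (h ord_max).
move=> [C hC]; exists C => i; rewrite big_ord_recr /=; exact: hC.
Qed.
End BndLemmas.

Section MeanLemmas.
Variables (I : Type) (Lam : mean I).
Lemma mN (f : I -> R) : bnd f -> Lam (fun i => - f i) = - Lam f.
Proof. move=> hf; rewrite -mulN1r -(mZ Lam (-1) hf).
by congr (mf Lam); apply: funext => i; rewrite mulN1r. Qed.
Lemma mB (f g : I -> R) : bnd f -> bnd g -> Lam (fun i => f i - g i) = Lam f - Lam g.
Proof. by move=> hf hg; rewrite mD ?mN //; apply: bnd_opp. Qed.
Lemma m0 : Lam (fun _ => 0) = 0.
Proof. exact: mC. Qed.
Lemma mnorm (f : I -> R) : bnd f -> `|Lam f| <= Lam (fun i => `|f i|).
Proof.
move=> hf; rewrite ler_norml; apply/andP; split.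
  rewrite -mN; last exact: bnd_norm.
  by apply: mle => //; [apply: bnd_opp; apply: bnd_norm| move=> i; rewrite lerNl -normrN ler_norm].
by apply: mle => //; [apply: bnd_norm| move=> i; rewrite ler_norm].
Qed.
Lemma mge0 (f : I -> R) : bnd f -> (forall i, 0 <= f i) -> 0 <= Lam f.
Proof. move=> hf h; rewrite -m0; apply: mle => //; exact: bnd_const. Qed.
Lemma mSum n (f : 'I_n -> I -> R) : (forall j, bnd (f j)) ->
  Lam (fun i => \sum_(j < n) f j i) = \sum_(j < n) Lam (f j).
Proof.
elim: n f => [|n IH] f h.
  under eq_fun do rewrite big_ord0. by rewrite big_ord0 m0.
under eq_fun do rewrite big_ord_recr /=.
rewrite mD; last exact: h.
  by rewrite IH ?big_ord_recr // => j; exact: h.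
by apply: bnd_sum => j; exact: h.
Qed.
End MeanLemmas.

Section LamStruct.
Variables (L : language) (I : Type) (Lam : mean I) (M : I -> structure L).

Definition pre := forall i, M i.
Definition pd (x y : pre) := Lam (fun i => dist (x i) (y i)).

Lemma bnd_dist (x y : pre) : bnd (fun i => dist (x i) (y i)).
Proof. by exists 1 => i; rewrite ger0_norm ?dist_ge0 ?dist_le1. Qed.

Lemma pd_ge0 x y : 0 <= pd x y.
Proof. by apply: mge0; [exact: bnd_dist| move=> i; exact: dist_ge0]. Qed.
Lemma pd_le1 x y : pd x y <= 1.
Proof. rewrite /pd -(mC Lam 1); apply: mle; [exact: bnd_dist|exact: bnd_const|].
by move=> i; exact: dist_le1. Qed.
Lemma pd_sym x y : pd x y = pd y x.
Proof. by rewrite /pd; congr (mf Lam); apply: funext => i; rewrite dist_sym. Qed.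
Lemma pd_tri x y z : pd x z <= pd x y + pd y z.
Proof. rewrite /pd -mD; try exact: bnd_dist.
apply: mle; [exact: bnd_dist| apply: bnd_add; exact: bnd_dist|].
by move=> i; exact: dist_triangle. Qed.
Lemma pd_refl x : pd x x = 0.
Proof. rewrite /pd -(m0 Lam); congr (mf Lam); apply: funext => i.
by apply/dist_eq0. Qed.

Definition pre0 : pre := fun i => epsilon (carrier_inhabited (M i)) (fun _ => True).
Definition rep (x : pre) : pre := epsilon (inhabits pre0) (fun y => pd y x = 0).

Lemma rep_spec x : pd (rep x) x = 0.
Proof. rewrite /rep; apply: (epsilon_spec (inhabits pre0) (fun y => pd y x = 0)).
by exists x; exact: pd_refl. Qed.

Lemma pd0_tri x y z : pd x y = 0 -> pd x z = pd y z.
Proof. move=> h; apply/eqP; rewrite eq_le; apply/andP; split.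
  by apply: le_trans (pd_tri x y z) _; rewrite h add0r.
by apply: le_trans (pd_tri y x z) _; rewrite pd_sym h add0r. Qed.

Lemma rep_eq x y : pd x y = 0 -> rep x = rep y.
Proof.
move=> h; rewrite /rep; congr epsilon; apply: funext => z; apply: propext.
rewrite ![pd z _]pd_sym (pd0_tri z h); by [].
Qed.

Lemma rep_idem x : rep (rep x) = rep x.
Proof. apply: rep_eq; exact: rep_spec. Qed.

Definition ucarrier := {x : pre | rep x = x}.
Definition cls (x : pre) : ucarrier := exist _ (rep x) (rep_idem x).

Lemma cls_val (a : ucarrier) : cls (sval a) = a.
Proof. apply: eq_sig_hprop; first by move=> x p q; apply: proof_irrelevance.
by case: a. Qed.

Lemma pd_rep_l x y : pd (rep x) y = pd x y.
Proof. by apply: pd0_tri; exact: rep_spec. Qed.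
Lemma pd_rep_r x y : pd x (rep y) = pd x y.
Proof. by rewrite pd_sym pd_rep_l pd_sym. Qed.

Definition udist (a b : ucarrier) := pd (sval a) (sval b).

Lemma udist_eq0 a b : udist a b = 0 <-> a = b.
Proof.
split; last by move=> ->; exact: pd_refl.
move=> h; apply: eq_sig_hprop; first by move=> x p q; apply: proof_irrelevance.
by case: a b h => [x hx] [y hy] /= h; rewrite -hx -hy; apply: rep_eq.
Qed.

Hypothesis Hcomp : forall u : nat -> pre,
  (forall eps : R, 0 < eps -> exists N : nat,
     forall m n : nat, (N <= m)%N -> (N <= n)%N -> pd (u m) (u n) < eps) ->
  exists y : pre, forall eps : R, 0 < eps -> exists N : nat,
     forall n : nat, (N <= n)%N -> pd (u n) y < eps.

Lemma ucomplete (u : nat -> ucarrier) :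
    (forall eps : R, 0 < eps -> exists N : nat,
        forall m n : nat, (N <= m)%N -> (N <= n)%N -> udist (u m) (u n) < eps) ->
    exists l : ucarrier, forall eps : R, 0 < eps -> exists N : nat,
        forall n : nat, (N <= n)%N -> udist (u n) l < eps.
Proof.
move=> hc; have [y hy] := Hcomp (u := fun n => sval (u n)) hc.
exists (cls y) => eps he; have [N hN] := hy eps he; exists N => n hn.
by rewrite /udist /= pd_rep_r; apply: hN.
Qed.

Definition ucinterp (c : const_sym L) : ucarrier := cls (fun i => cinterp (M i) c).
Definition ufinterp (F : func_sym L) (a : 'I_(func_arity F) -> ucarrier) : ucarrier :=
  cls (fun i => finterp (fun j => sval (a j) i)).
Definition urinterp (P : rel_sym L) (a : 'I_(rel_arity P) -> ucarrier) : R :=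
  Lam (fun i => rinterp (fun j => sval (a j) i)).

Lemma bnd_sumdist n (a b : 'I_n -> pre) :
  bnd (fun i => \sum_(j < n) dist (a j i) (b j i)).
Proof. by apply: bnd_sum => j; exact: bnd_dist. Qed.

Lemma pd_lip n (lam : R) (X Y : pre) (a b : 'I_n -> pre) :
  (forall i, dist (X i) (Y i) <= lam * \sum_(j < n) dist (a j i) (b j i)) ->
  pd X Y <= lam * \sum_(j < n) pd (a j) (b j).
Proof.
move=> h; rewrite /pd -mSum; last by move=> j; exact: bnd_dist.
rewrite -mZ; last exact: bnd_sumdist.
apply: mle => //; [exact: bnd_dist| apply: bnd_scale; exact: bnd_sumdist].
Qed.

Lemma ufinterp_lip (F : func_sym L) (a b : 'I_(func_arity F) -> ucarrier) :
    udist (ufinterp a) (ufinterp b)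
      <= func_lip F * \sum_(i < func_arity F) udist (a i) (b i).
Proof.
rewrite /udist /= pd_rep_l pd_rep_r.
apply: (pd_lip (a := fun j => sval (a j)) (b := fun j => sval (b j))) => i.
exact: finterp_lip.
Qed.

Lemma bnd_rel (P : rel_sym L) (a : 'I_(rel_arity P) -> pre) :
  bnd (fun i => rinterp (fun j => a j i)).
Proof. exists 1 => i; have /andP[h1 h2] := rinterp_range (fun j => a j i).
by rewrite ger0_norm. Qed.

Lemma urinterp_range (P : rel_sym L) (a : 'I_(rel_arity P) -> ucarrier) :
    0 <= urinterp a <= 1.
Proof.
apply/andP; split.
  apply: mge0; first exact: (bnd_rel (fun j => sval (a j))).
  by move=> i; have /andP[] := rinterp_range (fun j => sval (a j) i).
rewrite /urinterp -(mC Lam 1); apply: mle.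
- exact: (bnd_rel (fun j => sval (a j))).
- exact: bnd_const.
- by move=> i; have /andP[] := rinterp_range (fun j => sval (a j) i).
Qed.

Lemma rel_lip_pre (P : rel_sym L) (a b : 'I_(rel_arity P) -> pre) :
  `|Lam (fun i => rinterp (fun j => a j i)) - Lam (fun i => rinterp (fun j => b j i))|
    <= rel_lip P * \sum_(j < rel_arity P) pd (a j) (b j).
Proof.
rewrite -mB; try exact: bnd_rel.
apply: le_trans (mnorm _ _) _; first by apply: bnd_sub; exact: bnd_rel.
rewrite /pd -mSum; last by move=> j; exact: bnd_dist.
rewrite -mZ; last exact: bnd_sumdist.
apply: mle.
- by apply: bnd_norm; apply: bnd_sub; exact: bnd_rel.
- by apply: bnd_scale; exact: bnd_sumdist.
- by move=> i; exact: rinterp_lip.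
Qed.

Lemma urinterp_lip (P : rel_sym L) (a b : 'I_(rel_arity P) -> ucarrier) :
    `|urinterp a - urinterp b|
      <= rel_lip P * \sum_(i < rel_arity P) udist (a i) (b i).
Proof. exact: (rel_lip_pre (fun j => sval (a j)) (fun j => sval (b j))). Qed.

Definition ustruct : structure L :=
  @Structure L ucarrier (inhabits (cls pre0)) udist
    (fun x y => pd_ge0 _ _) udist_eq0 (fun x y => pd_sym _ _)
    (fun x y z => pd_tri _ _ _) (fun x y => pd_le1 _ _) ucomplete
    ucinterp ufinterp ufinterp_lip urinterp urinterp_range urinterp_lip.

End LamStruct.

Section SupSwap.
Variables (I : Type) (Lam : mean I).

Lemma sup_swap (X : Type) (x0 : X) (Y : I -> Type) (y0 : forall i, Y i)
  (G : X -> R) (g : forall i, Y i -> R) (C : R) :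
  (forall i y, `|g i y| <= C) -> (forall x, `|G x| <= C) ->
  (forall x, exists yh : forall i, Y i, G x = Lam (fun i => g i (yh i))) ->
  (forall yh : forall i, Y i, exists x, G x = Lam (fun i => g i (yh i))) ->
  sup [set G x | x in [set: X]] = Lam (fun i => sup [set g i y | y in [set: Y i]]).
Proof.
move=> hg hG h1 h2.
have bg : forall yh : forall i, Y i, bnd (fun i => g i (yh i)).
  by move=> yh; exists C => i; exact: hg.
have bs : bnd (fun i => sup [set g i y | y in [set: Y i]]).
  by exists C => i; apply: (sup_img_bound (y0 i)); exact: hg.
apply/eqP; rewrite eq_le; apply/andP; split.
  apply: (sup_img_ub x0) => x; have [yh ->] := h1 x.
  apply: mle => // i; exact: (sup_img_ge (y0 i) (hg i)).
apply/ler_addgt0Pr => eps he.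
pose yh := fun i => epsilon (inhabits (y0 i))
   (fun y => sup [set g i y | y in [set: Y i]] - eps < g i y).
have hyh : forall i, sup [set g i y | y in [set: Y i]] - eps < g i (yh i).
  move=> i; apply: (epsilon_spec (inhabits (y0 i))
   (fun y => sup [set g i y | y in [set: Y i]] - eps < g i y)).
  exact: (sup_img_adh (y0 i) (hg i) he).
have [x hx] := h2 yh.
rewrite -lerBlDr; apply: le_trans (sup_img_ge x0 hG x); rewrite hx.
rewrite -(mC Lam eps) -mB //; last exact: bnd_const.
apply: mle => //; first by apply: bnd_sub => //; exact: bnd_const.
by move=> i; apply: ltW.
Qed.

Lemma inf_swap (X : Type) (x0 : X) (Y : I -> Type) (y0 : forall i, Y i)
  (G : X -> R) (g : forall i, Y i -> R) (C : R) :
  (forall i y, `|g i y| <= C) -> (forall x, `|G x| <= C) ->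
  (forall x, exists yh : forall i, Y i, G x = Lam (fun i => g i (yh i))) ->
  (forall yh : forall i, Y i, exists x, G x = Lam (fun i => g i (yh i))) ->
  inf [set G x | x in [set: X]] = Lam (fun i => inf [set g i y | y in [set: Y i]]).
Proof.
move=> hg hG h1 h2.
rewrite inf_img (sup_swap x0 y0 (g := fun i y => - g i y) (C := C)).
- have -> : (fun i => inf [set g i y | y in [set: Y i]]) =
     (fun i => - sup [set - g i y | y in [set: Y i]]).
    by apply: funext => i; rewrite inf_img.
  rewrite mN //; exists C => i; apply: (sup_img_bound (y0 i)) => y.
  by rewrite normrN.
- by move=> i y; rewrite normrN.
- by move=> x; rewrite normrN.
- move=> x; have [yh hx] := h1 x; exists yh; rewrite hx mN //.
  by exists C => i; exact: hg.
- move=> yh; have [x hx] := h2 yh; exists x; rewrite hx mN //.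
  by exists C => i; exact: hg.
Qed.
End SupSwap.

Definition complete_hyp L (I : Type) (Lam : mean I) (M : I -> structure L) :=
  forall u : nat -> pre M,
  (forall eps : R, 0 < eps -> exists N : nat,
     forall m n : nat, (N <= m)%N -> (N <= n)%N -> pd Lam (u m) (u n) < eps) ->
  exists y : pre M, forall eps : R, 0 < eps -> exists N : nat,
     forall n : nat, (N <= n)%N -> pd Lam (u n) y < eps.

Section Los.
Variables (L : language) (I : Type) (Lam : mean I) (M : I -> structure L).
Variable Hc : complete_hyp Lam M.
Local Notation U := (ustruct Hc).

Lemma los_term (eh : nat -> pre M) (t : term L) :
  pd Lam (sval (@term_eval L U (fun n => cls Lam (eh n)) t))
     (fun i => term_eval (fun n => eh n i) t) = 0.
Proof.
elim: t => [y|c|F args IH] /=.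
- exact: rep_spec.
- exact: rep_spec.
- rewrite pd_rep_l; apply/eqP; rewrite eq_le pd_ge0 andbT.
  apply: (le_trans (pd_lip Lam (lam := func_lip F)
     (a := fun j => sval (@term_eval L U (fun n => cls Lam (eh n)) (args j)))
     (b := fun j => (fun i => term_eval (fun n => eh n i) (args j))) _)).
    move=> i; exact: finterp_lip.
  by rewrite big1 ?mulr0 // => j _; exact: IH.
Qed.

Lemma bnd_eval (e : forall i, nat -> M i) p : bnd (fun i => formula_eval (e i) p).
Proof. by exists (fbound p) => i; exact: eval_bound. Qed.

Lemma los (p : formula L) : forall eh : nat -> pre M,
  @formula_eval L U (fun n => cls Lam (eh n)) p =
  Lam (fun i => formula_eval (fun n => eh n i) p).
Proof.
elim: p => [|t1 t2|P args|p IHp q IHq|r p IHp|y p IHp|y p IHp] eh /=.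
- by rewrite mC.
- rewrite /udist.
  have h1 := los_term eh t1; have h2 := los_term eh t2.
  rewrite (pd0_tri _ h1) pd_sym (pd0_tri _ h2) pd_sym; by [].
- apply/eqP; rewrite -subr_eq0 -normr_le0.
  apply: (le_trans (rel_lip_pre Lam (fun j => sval (@term_eval L U (fun n => cls Lam (eh n)) (args j)))
     (fun j => (fun i => term_eval (fun n => eh n i) (args j))))).
  by rewrite big1 ?mulr0 // => j _; exact: los_term.
- by rewrite IHp IHq mD //; exact: bnd_eval.
- by rewrite IHp mZ //; exact: bnd_eval.
- have K1 : forall xh : pre M,
    @formula_eval L U (update (fun n => cls Lam (eh n)) y (cls Lam xh)) p =
    Lam (fun i => formula_eval (update (fun n => eh n i) y (xh i)) p).
    move=> xh.
    have -> : update (fun n => cls Lam (eh n)) y (cls Lam xh) =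
              (fun n => cls Lam (update eh y xh n)).
      by apply: funext => n; rewrite /update; case: (n == y).
    rewrite IHp; congr (mf Lam); apply: funext => i; congr formula_eval.
    by apply: funext => n; rewrite /update; case: (n == y).
  apply: (sup_swap (cls Lam (pre0 M)) (pre0 M) (C := fbound p)).
  + by move=> i m; exact: eval_bound.
  + by move=> m; exact: eval_bound.
  + by move=> m; exists (sval m); rewrite -K1 cls_val.
  + by move=> xh; exists (cls Lam xh); rewrite K1.
- have K1 : forall xh : pre M,
    @formula_eval L U (update (fun n => cls Lam (eh n)) y (cls Lam xh)) p =
    Lam (fun i => formula_eval (update (fun n => eh n i) y (xh i)) p).
    move=> xh.
    have -> : update (fun n => cls Lam (eh n)) y (cls Lam xh) =
              (fun n => cls Lam (update eh y xh n)).
      by apply: funext => n; rewrite /update; case: (n == y).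
    rewrite IHp; congr (mf Lam); apply: funext => i; congr formula_eval.
    by apply: funext => n; rewrite /update; case: (n == y).
  apply: (inf_swap (cls Lam (pre0 M)) (pre0 M) (C := fbound p)).
  + by move=> i m; exact: eval_bound.
  + by move=> m; exact: eval_bound.
  + by move=> m; exists (sval m); rewrite -K1 cls_val.
  + by move=> xh; exists (cls Lam xh); rewrite K1.
Qed.

Lemma los_gen (p : formula L) (e : nat -> U) :
  formula_eval e p = Lam (fun i => formula_eval (fun n => sval (e n) i) p).
Proof.
rewrite -los; congr formula_eval; apply: funext => n; by rewrite cls_val.
Qed.
End Los.

Section Avg.
Variable k : nat.
Local Notation kR := ((k.+1)%:R : R).

Lemma kR_gt0 : 0 < kR. Proof. by rewrite ltr0Sn. Qed.
Lemma kRinv_ge0 : 0 <= kR^-1. Proof. by rewrite invr_ge0 ltW ?kR_gt0. Qed.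

Definition avgf (f : 'I_k.+1 -> R) : R := kR^-1 * \sum_(i < k.+1) f i.

Lemma avgD f g : bnd f -> bnd g -> avgf (fun i => f i + g i) = avgf f + avgf g.
Proof. by move=> _ _; rewrite /avgf big_split mulrDr. Qed.
Lemma avgZ c f : bnd f -> avgf (fun i => c * f i) = c * avgf f.
Proof. by move=> _; rewrite /avgf -mulr_sumr mulrCA. Qed.
Lemma avgle f g : bnd f -> bnd g -> (forall i, f i <= g i) -> avgf f <= avgf g.
Proof. move=> _ _ h; rewrite /avgf; apply: ler_wpM2l; first exact: kRinv_ge0.
by apply: ler_sum => i _; exact: h. Qed.
Lemma avgC c : avgf (fun _ => c) = c.
Proof. rewrite /avgf sumr_const card_ord -[c *+ _]mulr_natr mulrC -mulrA mulfV ?mulr1 //.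
by rewrite lt0r_neq0 ?kR_gt0. Qed.

Definition avg_mean : mean 'I_k.+1 := Mean avgD avgZ avgle avgC.

Lemma avg_coord (f : 'I_k.+1 -> R) j : (forall i, 0 <= f i) -> f j <= kR * avgf f.
Proof.
move=> h; rewrite /avgf mulrA mulfV ?mul1r ?lt0r_neq0 ?kR_gt0 //.
rewrite (bigD1 j) //= lerDl; apply: sumr_ge0 => i _; exact: h.
Qed.

Lemma avg_complete L (M : 'I_k.+1 -> structure L) : complete_hyp avg_mean M.
Proof.
move=> u hc.
have hcj : forall j, exists y : M j, forall eps : R, 0 < eps -> exists N : nat,
    forall n : nat, (N <= n)%N -> dist (u n j) y < eps.
  move=> j; apply: dist_complete => eps he.
  have he' : 0 < eps / kR by rewrite divr_gt0 ?kR_gt0.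
  have [N hN] := hc _ he'; exists N => m n hm hn.
  have H1 := avg_coord (f := fun i => dist (u m i) (u n i)) j (fun i => dist_ge0 _ _).
  apply: le_lt_trans H1 _.
  have := hN m n hm hn; rewrite /pd /= ltr_pdivlMr ?kR_gt0 // mulrC.
  by [].
pose y : pre M := fun j => epsilon (carrier_inhabited (M j))
   (fun y => forall eps : R, 0 < eps -> exists N : nat,
    forall n : nat, (N <= n)%N -> dist (u n j) y < eps).
have hy : forall j eps, 0 < eps -> exists N : nat,
    forall n : nat, (N <= n)%N -> dist (u n j) (y j) < eps.
  move=> j; exact: (epsilon_spec (carrier_inhabited (M j)) _ (hcj j)).
exists y => eps he.
have he2 : 0 < eps / 2 by rewrite divr_gt0.
have [Nf hNf] := @choice _ _ (fun j N => forall n, (N <= n)%N -> dist (u n j) (y j) < eps / 2) (fun j => hy j _ he2).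
exists (\max_(j < k.+1) Nf j)%N => n hn.
apply: le_lt_trans (_ : eps / 2 < eps); last by rewrite ltr_pdivrMr // ltr_pMr // ltr1n.
rewrite /pd /= -(avgC (eps / 2)); apply: avgle; try exact: bnd_const.
  exact: bnd_dist.
move=> j; apply: ltW; apply: hNf.
apply: leq_trans hn; exact: (@leq_bigmax _ Nf j).
Qed.
End Avg.

Section Ultra.
Context {I : Type} (U : set_system I) {HU : UltraFilter U}.

Lemma uT : U setT. Proof. exact: filterT. Qed.
Lemma uI A B : U A -> U B -> U (A `&` B). Proof. exact: filterI. Qed.
Lemma uS (A B : set I) : A `<=` B -> U A -> U B. Proof. exact: filterS. Qed.
Lemma uex (A : set I) : U A -> exists i, A i. Proof. exact: filter_ex. Qed.
Lemma uC (A : set I) : U A \/ U (~` A). Proof. exact: in_ultra_setVsetC. Qed.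

Definition ulim (f : I -> R) : R := sup [set a | U [set i | a <= f i]].

Lemma ulim_spec f : bnd f -> forall eps, 0 < eps -> U [set i | `|f i - ulim f| < eps].
Proof.
move=> [C hC] eps he.
have hC' : forall i, - C <= f i <= C by move=> i; rewrite -ler_norml.
set S := [set a | U [set i | a <= f i]].
have hS : has_sup S.
  split.
    exists (- C); rewrite /S /=; apply: uS uT => i _.
    by have /andP[] := hC' i.
  exists C => a ha; have [i hi] := uex ha.
  have /andP[_ h2] := hC' i; exact: le_trans hi h2.
have [a Sa ha] := sup_adherent he hS.
have h1 : U [set i | ulim f - eps < f i].
  apply: uS Sa => i /= hi; exact: lt_le_trans ha hi.
have h2 : U [set i | f i < ulim f + eps].
  case: (uC [set i | ulim f + eps <= f i]) => h.
    have := sup_upper_bound hS h; rewrite -/(ulim f) => hh.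
    exfalso; move: hh; rewrite gerDl leNgt he //.
  apply: uS h => i /=; rewrite ltNge; by move/negP.
apply: uS (uI h1 h2) => i [/= hi1 hi2].
rewrite ltr_norml; apply/andP; split; lra.
Qed.

Lemma ulim_uniq f l : bnd f -> (forall eps, 0 < eps -> U [set i | `|f i - l| < eps]) ->
  ulim f = l.
Proof.
move=> hb hl; apply/eqP; rewrite -subr_eq0 -normr_le0.
apply/ler_addgt0Pr => eps he; rewrite add0r.
have he2 : 0 < eps / 2 by rewrite divr_gt0.
have [i [/= hi1 hi2]] := uex (uI (ulim_spec hb he2) (hl _ he2)).
have : `|ulim f - l| <= `|ulim f - f i| + `|f i - l|.
  have E : ulim f - l = (ulim f - f i) + (f i - l) by lra.
  rewrite E; exact: ler_normD.
move: hi1 hi2; rewrite distrC; lra.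
Qed.

Lemma ulim_lt f a : bnd f -> ulim f < a -> U [set i | f i < a].
Proof.
move=> hb ha; have : 0 < a - ulim f by rewrite subr_gt0.
move=> /(ulim_spec hb); apply: uS => i /=; rewrite ltr_norml => /andP[_ h]; lra.
Qed.

Lemma ulim_le_ev f g : bnd f -> bnd g -> U [set i | f i <= g i] -> ulim f <= ulim g.
Proof.
move=> hf hg hu; rewrite leNgt; apply/negP => hlt.
have he : 0 < (ulim f - ulim g) / 2 by rewrite divr_gt0 // subr_gt0.
have [i [[/= h1 h2] h3]] := uex (uI (uI (ulim_spec hf he) (ulim_spec hg he)) hu).
move: h1 h2 h3; rewrite !ltr_norml => /andP[h1 _] /andP[_ h2] h3; lra.
Qed.

Lemma ulimC c : ulim (fun _ => c) = c.
Proof. apply: ulim_uniq; first exact: bnd_const.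
by move=> eps he; apply: uS uT => i _ /=; rewrite subrr normr0. Qed.

Lemma ulimD f g : bnd f -> bnd g -> ulim (fun i => f i + g i) = ulim f + ulim g.
Proof.
move=> hf hg; apply: ulim_uniq; first exact: bnd_add.
move=> eps he; have he2 : 0 < eps / 2 by rewrite divr_gt0.
apply: uS (uI (ulim_spec hf he2) (ulim_spec hg he2)) => i [/= h1 h2].
move: h1 h2; rewrite !ltr_norml => /andP[h1 h1'] /andP[h2 h2']; apply/andP; split; lra.
Qed.

Lemma ulimZ c f : bnd f -> ulim (fun i => c * f i) = c * ulim f.
Proof.
move=> hf; apply: ulim_uniq; first exact: bnd_scale.
move=> eps he; have hc : 0 < `|c| + 1 by rewrite ltr_wpDl.
have he2 : 0 < eps / (`|c| + 1) by rewrite divr_gt0.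
apply: uS (ulim_spec hf he2) => i /= h.
rewrite -mulrBr normrM.
apply: le_lt_trans (_ : `|c| * `|f i - ulim f| <= (`|c| + 1) * `|f i - ulim f|) _.
  by apply: ler_wpM2r; [exact: normr_ge0| rewrite lerDl].
by rewrite mulrC -ltr_pdivlMr.
Qed.

Lemma ulimle f g : bnd f -> bnd g -> (forall i, f i <= g i) -> ulim f <= ulim g.
Proof. move=> hf hg h; apply: ulim_le_ev => //; by apply: uS uT => i _; exact: h. Qed.

Definition ulim_mean : mean I := Mean ulimD ulimZ ulimle ulimC.

End Ultra.

Definition ee (k : nat) : R := ((2 : R) ^+ k)^-1.

Lemma ee_gt0 k : 0 < ee k.
Proof. by rewrite /ee invr_gt0 exprn_gt0. Qed.

Lemma eeS k : ee k.+1 = ee k / 2.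
Proof. by rewrite /ee exprS invfM mulrC. Qed.

Lemma ee_small eps : 0 < eps -> exists k, ee k < eps.
Proof.
move=> he; have [n hn] := small_exists he; exists n.
apply: le_lt_trans hn; rewrite /ee div1r lef_pV2 ?posrE ?exprn_gt0 ?ltr0Sn //.
have := ltn_expl n (isT : (1 < 2)%N) => h.
rewrite -natrX ler_nat; exact: h.
Qed.

Section UltraComplete.
Context {I : Type} (U : set_system I) {HU : UltraFilter U}.
Variables (L : language) (M : I -> structure L).

Lemma ulim_complete : complete_hyp (@ulim_mean I U HU) M.
Proof.
move=> u hc.
have [Nf hNf] := @choice _ _ (fun k N => forall m n, (N <= m)%N -> (N <= n)%N ->
   pd (@ulim_mean I U HU) (u m) (u n) < ee k) (fun k => hc _ (ee_gt0 k)).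
pose phi k := (\sum_(j < k.+1) Nf j)%N.
have hphi1 : forall k, (Nf k <= phi k)%N.
  by move=> k; rewrite /phi big_ord_recr /= leq_addl.
have hphi2 : forall k, (phi k <= phi k.+1)%N.
  by move=> k; rewrite {2}/phi big_ord_recr /= leq_addr.
pose x k := u (phi k).
have hx : forall k, pd (@ulim_mean I U HU) (x k) (x k.+1) < ee k.
  move=> k; apply: hNf; first exact: hphi1.
  exact: leq_trans (hphi1 k) (hphi2 k).
pose A k := [set i | forall j, (j < k)%N -> dist (x j i) (x j.+1 i) < ee j].
have hA : forall k, U (A k).
  elim=> [|k IH]; first by apply: (@uS I U HU _ _) (@uT I U HU) => i _ j.
  have hk : U [set i | dist (x k i) (x k.+1 i) < ee k].
    apply: (ulim_lt (U:=U)); [exact: bnd_dist| exact: hx].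
  apply: (@uS I U HU _ _) ((@uI I U HU _ _) IH hk) => i [/= h1 h2] j; rewrite ltnS leq_eqVlt => /orP[/eqP ->|hj] //.
  exact: h1.
have Adec : forall k i, A k.+1 i -> A k i.
  by move=> k i h j hj; apply: h; apply: ltnW.
pose w := fix w (k : nat) : pre M :=
  match k with 0 => x 0 | k'.+1 => fun i => if pselect (A k'.+1 i) then x k'.+1 i else w k' i end.
have wA : forall k i, A k i -> w k i = x k i.
  case=> [|k] i h //=; by case: pselect.
have wstep : forall k i, dist (w k i) (w k.+1 i) <= ee k.
  move=> k i /=; case: pselect => h.
    rewrite wA; last exact: Adec.
    by apply: ltW; apply: h.
  by rewrite (proj2 (dist_eq0 _ _) erefl); apply: ltW; exact: ee_gt0.
have wcau : forall i m d, dist (w m i) (w (m + d)%N i) <= 2 * ee m - 2 * ee (m + d)%N.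
  move=> i m; elim=> [|d IH].
    by rewrite addn0 (proj2 (dist_eq0 _ _) erefl) subrr.
  apply: le_trans (dist_triangle _ (w (m + d)%N i) _) _.
  have := wstep (m + d)%N i; rewrite addnS eeS; move: IH; lra.
have wcau2 : forall i m n, (m <= n)%N -> dist (w m i) (w n i) <= 2 * ee m.
  move=> i m n hmn; rewrite -(subnKC hmn).
  apply: le_trans (wcau i m (n - m)%N) _; have := ee_gt0 (m + (n - m))%N; lra.
have hcy : forall i, exists y : M i, forall eps : R, 0 < eps -> exists N : nat,
    forall n : nat, (N <= n)%N -> dist (w n i) y < eps.
  move=> i; apply: dist_complete => eps he.
  have he4 : 0 < eps / 4 by rewrite divr_gt0.
  have [k hk] := ee_small he4.
  exists k => m n hm hn.
  apply: le_lt_trans (dist_triangle _ (w k i) _) _.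
  rewrite [dist (w m i) (w k i)]dist_sym.
  have := wcau2 i k m hm; have := wcau2 i k n hn.
  move: hk; lra.
pose y : pre M := fun i => epsilon (carrier_inhabited (M i))
   (fun y => forall eps : R, 0 < eps -> exists N : nat,
    forall n : nat, (N <= n)%N -> dist (w n i) y < eps).
have hy : forall i eps, 0 < eps -> exists N : nat,
    forall n : nat, (N <= n)%N -> dist (w n i) (y i) < eps.
  move=> i; exact: (epsilon_spec (carrier_inhabited (M i)) _ (hcy i)).
have wy : forall i m, dist (w m i) (y i) <= 2 * ee m.
  move=> i m; apply/ler_addgt0Pr => d hd.
  have [N hN] := hy i d hd.
  apply: le_trans (dist_triangle _ (w (maxn m N) i) _) _.
  have := wcau2 i m (maxn m N) (leq_maxl _ _).
  have := hN (maxn m N) (leq_maxr _ _); lra.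
have xy : forall m, pd (@ulim_mean I U HU) (x m) y <= 2 * ee m.
  move=> m; rewrite /pd /= -(@ulimC I U HU (2 * ee m)); apply: (ulim_le_ev (U:=U)).
  - exact: bnd_dist.
  - exact: bnd_const.
  - by apply: (@uS I U HU _ _) (hA m) => i hi /=; rewrite -wA //; exact: wy.
exists y => eps he.
have he3 : 0 < eps / 3 by rewrite divr_gt0.
have [k hk] := ee_small he3.
exists (Nf k) => n hn.
apply: le_lt_trans (pd_tri _ _ (x k) _) _.
have := hNf k n (phi k) hn (hphi1 k); have := xy k; move: hk; rewrite /x; lra.
Qed.
End UltraComplete.

Definition pos (x : R) : R := if x <= 0 then 0 else x.

Lemma pos_ge0 x : 0 <= pos x.
Proof. rewrite /pos; case: ifP => // /negbT; rewrite -ltNge => h; exact: ltW. Qed.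

Lemma pos_ge x : x <= pos x.
Proof. rewrite /pos; case: ifP => //. Qed.

Lemma pos_step s v : pos (s + v) ^+ 2 <= pos s ^+ 2 + 2 * pos s * v + v ^+ 2.
Proof.
rewrite /pos; case: ifP => h1; case: ifP => h2;
  move: h1 h2; rewrite ?lerNgt => h1 h2; rewrite !expr2;
  try (move/negbT: h1; rewrite -ltNge => h1);
  try (move/negbT: h2; rewrite -ltNge => h2); nra.
Qed.

Lemma In_map_ex (A B : Type) (f : A -> B) (s : seq A) p :
  List.In p (map f s) -> exists x, List.In x s /\ p = f x.
Proof.
elim: s => [|a s IH] //= [<-|h]; first by exists a; split; [left|].
by have [x [hx ->]] := IH h; exists x; split; [right|].
Qed.

Lemma In_sum_le (A : Type) (f : A -> R) (s : seq A) x :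
  (forall y, 0 <= f y) -> List.In x s -> f x <= \sum_(y <- s) f y.
Proof.
move=> h0; elim: s => [|a s IH] //= [->|h]; rewrite big_cons.
  by rewrite lerDl sumr_ge0.
by apply: le_trans (IH h) _; rewrite lerDr.
Qed.

Section Blackwell.
Variables (L : language) (T : theory L).
Hypothesis (hT : is_theory T) (hA : affinely_satisfiable T).

Definition defpt (M : structure L) : M := epsilon (carrier_inhabited M) (fun _ => True).
Definition sv (M : structure L) (p : formula L) := formula_eval (fun _ => defpt M) p.
Definition vc (c : condition L) (M : structure L) := sv M c.1 - sv M c.2.
Definition Sh (h : seq (structure L)) c := \sum_(M <- h) vc c M.

Lemma blackwell_step (cs : seq (condition L)) (h : seq (structure L)) :
  (forall c, List.In c cs -> T c) ->
  exists M : structure L, \sum_(c <- cs) pos (Sh h c) * vc c M <= 0.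
Proof.
move=> hcs.
pose l := [seq (pos (Sh h c), c) | c <- cs].
have hl : forall p, List.In p l -> T p.2 /\ 0 <= p.1.
  move=> p hp; have [c [hc ->]] := In_map_ex hp; rewrite /=; split; [exact: hcs | exact: pos_ge0].
have [M hM] := hA hl; exists M.
have := hM (fun _ => defpt M); rewrite /comb_condition /= !comb_eval.
rewrite !big_map /= => hle.
rewrite /vc; under eq_bigr do rewrite mulrBr.
by rewrite sumrB subr_le0.
Qed.

Definition Bc (cs : seq (condition L)) := \sum_(c <- cs) (fbound c.1 + fbound c.2) ^+ 2.

Lemma blackwell_iter (cs : seq (condition L)) :
  (forall c, List.In c cs -> T c) ->
  forall k, exists h : seq (structure L), size h = k /\
    \sum_(c <- cs) pos (Sh h c) ^+ 2 <= k%:R * Bc cs.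
Proof.
move=> hcs; elim=> [|k [h [hs hP]]].
  exists [::]; split => //; rewrite mul0r.
  rewrite big1 // => c _; rewrite /Sh big_nil /pos lexx expr2 mulr0 //.
have [M hM] := blackwell_step h hcs.
exists (M :: h); split; first by rewrite /= hs.
have hS : forall c, Sh (M :: h) c = Sh h c + vc c M by move=> c; rewrite /Sh big_cons addrC.
apply: le_trans (_ : \sum_(c <- cs) (pos (Sh h c) ^+ 2 + 2 * pos (Sh h c) * vc c M + vc c M ^+ 2) <= _).
  by apply: ler_sum => c _; rewrite hS; exact: pos_step.
rewrite !big_split /= -[(k.+1)%:R]natr1 mulrDl mul1r.
have h2 : \sum_(c <- cs) 2 * pos (Sh h c) * vc c M <= 0.
  under eq_bigr do rewrite -mulrA.
  by rewrite -mulr_sumr pmulr_rle0.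
have h3 : \sum_(c <- cs) vc c M ^+ 2 <= Bc cs.
  apply: ler_sum => c _.
  have b1 := eval_bound c.1 (fun _ => defpt M).
  have b2 := eval_bound c.2 (fun _ => defpt M).
  move: b1 b2; rewrite /vc /sv !ler_norml => /andP[b1 b1'] /andP[b2 b2'].
  rewrite !expr2; nra.
move: hP h2 h3; lra.
Qed.

Lemma blackwell (cs : seq (condition L)) (delta : R) :
  (forall c, List.In c cs -> T c) -> 0 < delta ->
  exists N : structure L, forall c, List.In c cs -> forall e : nat -> N,
    formula_eval e c.1 <= formula_eval e c.2 + delta.
Proof.
move=> hcs hd.
have hB : 0 <= Bc cs by apply: sumr_ge0 => c _; rewrite sqr_ge0.
have hq : 0 < delta ^+ 2 / (Bc cs + 1) by rewrite divr_gt0 ?exprn_gt0 // ltr_wpDl.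
have [K hK] := small_exists hq.
have hKR : 0 < (K.+1)%:R :> R by rewrite ltr0Sn.
have hK' : Bc cs + 1 < (K.+1)%:R * delta ^+ 2.
  move: hK; rewrite ltr_pdivrMr // mulrAC ltr_pdivlMr ?ltr_wpDl // mul1r mulrC //.
have [h [hs hP]] := blackwell_iter hcs K.+1.
case: h hs hP => [//|M0 h'] hs hP.
set h := M0 :: h' in hs hP.
pose Ms : 'I_K.+1 -> structure L := fun j => nth M0 h j.
exists (ustruct (@avg_complete K L Ms)) => c hc e.
have [s1 s2] := hT (hcs c hc).
rewrite !los_gen /= /avgf -lerBlDl -mulrBr -sumrB.
have E : forall j : 'I_K.+1, formula_eval (fun n => sval (e n) j) c.1 -
      formula_eval (fun n => sval (e n) j) c.2 = vc c (Ms j).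
  by move=> j; rewrite /vc /sv (sentence_eval _ (fun _ => defpt (Ms j)) s1) (sentence_eval _ (fun _ => defpt (Ms j)) s2).
under eq_bigr do rewrite E.
have ES : \sum_(j < K.+1) vc c (Ms j) = Sh h c.
  rewrite /Sh (big_nth M0) hs big_mkord; by [].
rewrite ES.
have hSc : pos (Sh h c) ^+ 2 <= (K.+1)%:R * Bc cs.
  apply: le_trans hP; apply: (In_sum_le (f := fun c => pos (Sh h c) ^+ 2)) => //.
  by move=> y; rewrite sqr_ge0.
have hpos := pos_ge (Sh h c); have hpos0 := pos_ge0 (Sh h c).
rewrite ler_pdivrMl //.
have : pos (Sh h c) < (K.+1)%:R * delta.
  rewrite ltNge; apply/negP => hge.
  have : ((K.+1)%:R * delta) ^+ 2 <= pos (Sh h c) ^+ 2.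
    by rewrite !expr2; apply: ler_pM => //; apply: mulr_ge0; rewrite ?ltW.
  move: hSc hK' hB hKR; rewrite !expr2; nra.
move: hpos; lra.
Qed.
End Blackwell.

Theorem mainTheorem2 (L : language) (T : theory L) :
  is_theory T -> affinely_satisfiable T -> exists M : structure L, is_model M T.
Proof.
move=> hT hA.
have [M0 _] := hA [::] (fun p (h : List.In p ([::] : seq (R * condition L))) => False_ind (T p.2 /\ 0 <= p.1) h).
pose I := (seq (condition L) * nat)%type.
have hN : forall i : I, exists N : structure L, (forall c, List.In c i.1 -> T c) ->
    forall c, List.In c i.1 -> forall e : nat -> N,
    formula_eval e c.1 <= formula_eval e c.2 + 1 / (i.2.+1)%:R.
  move=> [cs n] /=; case: (pselect (forall c, List.In c cs -> T c)) => h.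
    have hd : 0 < 1 / (n.+1)%:R :> R by rewrite divr_gt0 ?ltr0Sn.
    have [N hN] := blackwell hT hA h hd; exists N => _; exact: hN.
  by exists M0 => h'; exfalso.
have [Nf hNf] := @choice I (structure L) _ hN.
pose Bs (cs : seq (condition L)) (m : nat) : set I :=
  [set i | (forall c, List.In c cs -> List.In c i.1) /\ (forall c, List.In c i.1 -> T c) /\ (m <= i.2)%N].
pose F0 : set_system I := fun A => exists cs m, (forall c, List.In c cs -> T c) /\ Bs cs m `<=` A.
have PF : ProperFilter F0.
  apply: Build_ProperFilter.
    move=> [cs [m [hcs hs]]]; apply: (hs (cs, m)); split => //; split => //.
  apply: Build_Filter.
  - by exists [::], 0%N; split.
  - move=> A B [cs1 [m1 [h1 s1]]] [cs2 [m2 [h2 s2]]].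
    exists (cs1 ++ cs2), (maxn m1 m2); split.
      by move=> c hc; case: (List.in_app_or _ _ _ hc) => ?; [apply: h1| apply: h2].
    move=> i [hi1 [hi2 hi3]]; split.
      apply: s1; split; [move=> c hc; apply: hi1; apply: List.in_or_app; left => //|split=> //].
      by apply: leq_trans hi3; rewrite leq_maxl.
    apply: s2; split; [move=> c hc; apply: hi1; apply: List.in_or_app; right => //|split=> //].
    by apply: leq_trans hi3; rewrite leq_maxr.
  - by move=> A B sAB [cs [m [h1 h2]]]; exists cs, m; split => //; apply: subset_trans sAB.
have [U [HU sFU]] := ultraFilterLemma PF.
exists (ustruct (@ulim_complete I U HU L Nf)) => c hc e.
rewrite !los_gen /=.
apply/ler_addgt0Pr => eps he.
have [m hm] := small_exists he.
have hU : U (Bs [:: c] m).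
  apply: sFU; exists [:: c], m; split => //.
  by move=> c' [<-|[]].
have hb1 := bnd_eval (fun i n => sval (e n) i) c.1.
have hb2 := bnd_eval (fun i n => sval (e n) i) c.2.
apply: le_trans (_ : ulim U (fun i => formula_eval (fun n => sval (e n) i) c.2 + 1 / (m.+1)%:R) <= _).
  apply: (@ulim_le_ev I U HU) => //; first by apply: bnd_add => //; exact: bnd_const.
  apply: (@uS I U HU _ _ _ hU) => i [h1 [h2 h3]] /=.
  apply: le_trans (hNf i h2 c (h1 c (or_introl erefl)) (fun n => sval (e n) i)) _.
  rewrite lerD2l !div1r lef_pV2 ?posrE ?ltr0Sn // ler_nat; exact: h3.
rewrite (@ulimD I U HU) //; last exact: bnd_const.
by rewrite (@ulimC I U HU) lerD2l ltW.
Qed.
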